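(* Consider the sub-$\ell^\infty$ structure on $\mathbb{R}^3$ defined by $X_1=\partial_x+y^2\partial_z$, $X_2=\partial_y$. If an extremal pair $(\lambda,\gamma)$ restricted to an open interval $I$ is an abnormal arc and $\gamma$ is not constant on $I$, then $\gamma(I)$ is contained in a line $\{y=0,\ z=z_0\}$ for some $z_0\in\mathbb{R}$. Conversely, every admissible trajectory contained in such a line admits an extremal lift whose restriction to its whole domain is an abnormal arc.
   Context: Sub-$\ell^\infty$ structure defined by smooth vector fields $X_1,\dots,X_k$ on a manifold $M$: an admissible trajectory is an absolutely continuous curve $\gamma:[0,T]\to M$ together with a measurable control $u=(u_1,\dots,u_k):[0,T]\to\mathbb{R}^k$ with $|u_i(t)|\le1$ for all $i$ and a.e. $t$, such that $\dot\gamma(t)=\sum_i u_i(t)X_i(\gamma(t))$ for a.e. $t$. An extremal pair is a pair $(\lambda,\gamma)$ where $\gamma$ is admissible with control $u$ and $\lambda:[0,T]\to T^*M$ is absolutely continuous with $\lambda(t)\in T^*_{\gamma(t)}M\setminus\{0\}$, such that, with $\mathcal H(\lambda,p,u)=\sum_i u_i\langle\lambda,X_i(p)\rangle$, in canonical coordinates $\dot\lambda=-\partial_p\mathcal H(\lambda,\gamma,u)$, $\dot\gamma=\partial_\lambda\mathcal H(\lambda,\gamma,u)$ a.e., and there is a constant $\lambda_0\ge0$ with $\sum_iu_i(t)\langle\lambda(t),X_i(\gamma(t))\rangle=\sum_i|\langle\lambda(t),X_i(\gamma(t))\rangle|=\lambda_0$ for a.e. $t$; $\gamma$ is then an extremal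 trajectory and $\lambda$ an extremal lift. The switching functions are $\varphi_j(t)=\langle\lambda(t),X_j(\gamma(t))\rangle$. The restriction of an extremal pair to an open interval $I$ is an abnormal arc if $\varphi_j\equiv0$ on $I$ for all $j=1,\dots,k$. *)

(* Defs.v *)
From Stdlib Require Import Reals Lra Lia.
Open Scope R_scope.

(* Points / covectors of R^n are represented as nat -> R (coordinates j < n). *)
Definition pt := nat -> R.

Fixpoint rsum (m : nat) (f : nat -> R) : R :=
  match m with O => 0 | S m' => rsum m' f + f m' end.

Definition pairing (n : nat) (l v : pt) : R := rsum n (fun j => l j * v j).

Definition upd (p : pt) (j : nat) (s : R) : pt :=
  fun i => if Nat.eqb i j then s else p i.

Definition negligible (N : R -> Prop) : Prop :=
  forall eps, 0 < eps -> exists c d : nat -> R,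
    (forall i, c i <= d i) /\
    (forall x, N x -> exists i, c i < x < d i) /\
    (forall m, rsum m (fun i => d i - c i) < eps).

Definition ae_on (a b : R) (P : R -> Prop) : Prop :=
  negligible (fun t => a <= t <= b /\ ~ P t).

Definition abs_cont (f : R -> R) (a b : R) : Prop :=
  forall eps, 0 < eps -> exists delta, 0 < delta /\
    forall (m : nat) (c d : nat -> R),
      (forall i, (i < m)%nat -> a <= c i /\ c i <= d i /\ d i <= b) ->
      (forall i j, (i < m)%nat -> (j < m)%nat -> i <> j ->
                   d i <= c j \/ d j <= c i) ->
      rsum m (fun i => d i - c i) < delta ->
      rsum m (fun i => Rabs (f (d i) - f (c i))) < eps.

(* Sub-l^infty structure on R^n given by k vector fields X 0, ..., X (k-1). *)

Definition admissible (n k : nat) (X : nat -> pt -> pt) (T : R)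
  (gamma : R -> pt) (u : R -> nat -> R) : Prop :=
  (forall j, (j < n)%nat -> abs_cont (fun t => gamma t j) 0 T) /\
  ae_on 0 T (fun t => forall i, (i < k)%nat -> Rabs (u t i) <= 1) /\
  ae_on 0 T (fun t => forall j, (j < n)%nat ->
     derivable_pt_lim (fun s => gamma s j) t
       (rsum k (fun i => u t i * X i (gamma t) j))).

Definition Ham (n k : nat) (X : nat -> pt -> pt) (l p : pt) (w : nat -> R) : R :=
  rsum k (fun i => w i * pairing n l (X i p)).

Definition extremal_pair (n k : nat) (X : nat -> pt -> pt) (T : R)
  (lam gamma : R -> pt) (u : R -> nat -> R) : Prop :=
  admissible n k X T gamma u /\
  (forall j, (j < n)%nat -> abs_cont (fun t => lam t j) 0 T) /\
  (forall t, 0 <= t <= T -> exists j, (j < n)%nat /\ lam t j <> 0) /\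
  (* lambda' = - d_p H,  gamma' = d_lambda H  (a.e.) *)
  ae_on 0 T (fun t => forall j, (j < n)%nat ->
     (exists dl, derivable_pt_lim (fun s => lam s j) t dl /\
        derivable_pt_lim (fun s => Ham n k X (lam t) (upd (gamma t) j s) (u t))
                         (gamma t j) (- dl)) /\
     (exists dg, derivable_pt_lim (fun s => gamma s j) t dg /\
        derivable_pt_lim (fun s => Ham n k X (upd (lam t) j s) (gamma t) (u t))
                         (lam t j) dg)) /\
  (* maximality condition with constant lambda_0 >= 0 *)
  (exists lam0, 0 <= lam0 /\
     ae_on 0 T (fun t =>
       Ham n k X (lam t) (gamma t) (u t) = lam0 /\
       rsum k (fun i => Rabs (pairing n (lam t) (X i (gamma t)))) = lam0)).

Definition switching (n : nat) (X : nat -> pt -> pt) (lam gamma : R -> pt)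
  (j : nat) (t : R) : R := pairing n (lam t) (X j (gamma t)).

Definition abnormal_arc (n k : nat) (X : nat -> pt -> pt) (lam gamma : R -> pt)
  (a b : R) : Prop :=
  forall t, a < t < b -> forall j, (j < k)%nat -> switching n X lam gamma j t = 0.

(* The structure on R^3 (coordinates x = 0, y = 1, z = 2):
   X_1 = d_x + y^2 d_z  (index 0),  X_2 = d_y (index 1). *)
Definition X1 (p : pt) : pt :=
  fun j => match j with 0%nat => 1 | 2%nat => (p 1%nat)^2 | _ => 0 end.
Definition X2 (p : pt) : pt :=
  fun j => match j with 1%nat => 1 | _ => 0 end.
Definition Xex (i : nat) : pt -> pt :=
  match i with 0%nat => X1 | _ => X2 end.

(* Main.v *)
Require Import Defs.
From Stdlib Require Import Reals Lra Lia Arith Classical FunctionalExtensionality.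
Open Scope R_scope.

Lemma rsum_ext m f g : (forall i, (i < m)%nat -> f i = g i) -> rsum m f = rsum m g.
Proof. induction m; simpl; intros H; auto. rewrite IHm by (intros; apply H; lia). rewrite H by lia; auto. Qed.

Lemma rsum_le m f g : (forall i, (i < m)%nat -> f i <= g i) -> rsum m f <= rsum m g.
Proof. induction m; simpl; intros H; [lra|]. assert (H1 := IHm ltac:(intros; apply H; lia)). assert (H2 := H m ltac:(lia)). lra. Qed.

Lemma rsum_zero m : rsum m (fun _ => 0) = 0.
Proof. induction m; simpl; auto. rewrite IHm; ring. Qed.

Lemma rsum_nonneg m f : (forall i, 0 <= f i) -> 0 <= rsum m f.
Proof. intros H; induction m; simpl; [lra|]. specialize (H m). lra. Qed.

Lemma rsum_mono m m' f : (forall i, 0 <= f i) -> (m <= m')%nat -> rsum m f <= rsum m' f.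
Proof. intros H Hm. induction Hm; [lra|]. simpl. specialize (H m0). lra. Qed.

Lemma rsum_tail M M' g : (M <= M')%nat -> (forall j, (M <= j)%nat -> g j = 0) -> rsum M' g = rsum M g.
Proof. intros Hm H. induction Hm as [|k Hk IH]; auto. simpl. rewrite IH, H by lia. ring. Qed.

Lemma rsum_upd m i g g' : (i < m)%nat -> (forall j, j <> i -> g' j = g j) -> rsum m g' = rsum m g + (g' i - g i).
Proof.
  intros Hi H. induction m; [lia|]. simpl.
  destruct (Nat.eq_dec m i) as [->|Hne].
  - rewrite (rsum_ext i g' g) by (intros; apply H; lia). ring.
  - rewrite IHm by lia. rewrite (H m Hne). ring.
Qed.

Definition ilv (f g : nat -> R) (k : nat) : R := if Nat.even k then f (Nat.div2 k) else g (Nat.div2 k).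

Lemma ilv_even f g n : ilv f g (2 * n) = f n.
Proof. unfold ilv. rewrite Nat.even_even, Nat.div2_double. auto. Qed.
Lemma ilv_odd f g n : ilv f g (S (2 * n)) = g n.
Proof. unfold ilv. rewrite Nat.even_succ, <- Nat.negb_even, Nat.even_even, Nat.div2_succ_double. auto. Qed.

Lemma rsum_ilv m f g : rsum (2 * m) (ilv f g) = rsum m f + rsum m g.
Proof.
  induction m; simpl; [ring|].
  replace (m + S (m + 0))%nat with (S (2 * m)) by lia. simpl rsum.
  rewrite ilv_odd. replace (m + (m + 0))%nat with (2 * m)%nat by lia.
  rewrite ilv_even, IHm. ring.
Qed.

Lemma negligible_union (N1 N2 : R -> Prop) : negligible N1 -> negligible N2 -> negligible (fun x => N1 x \/ N2 x).
Proof.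
  intros H1 H2 eps He.
  destruct (H1 (eps/2) ltac:(lra)) as [c1 [d1 [Hc1 [Hv1 Hs1]]]].
  destruct (H2 (eps/2) ltac:(lra)) as [c2 [d2 [Hc2 [Hv2 Hs2]]]].
  exists (ilv c1 c2), (ilv d1 d2). split; [|split].
  - intros i. unfold ilv. destruct (Nat.even i); auto.
  - intros x [Hx|Hx].
    + destruct (Hv1 x Hx) as [i Hi]. exists (2*i)%nat. rewrite !ilv_even. auto.
    + destruct (Hv2 x Hx) as [i Hi]. exists (S (2*i)). rewrite !ilv_odd. auto.
  - intros m.
    assert (Hnn : forall i, 0 <= ilv d1 d2 i - ilv c1 c2 i).
    { intros i. unfold ilv. destruct (Nat.even i); [specialize (Hc1 (Nat.div2 i))|specialize (Hc2 (Nat.div2 i))]; lra. }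
    apply Rle_lt_trans with (rsum (2*m) (fun i => ilv d1 d2 i - ilv c1 c2 i)).
    { apply rsum_mono; auto; lia. }
    rewrite (rsum_ext _ _ (ilv (fun i => d1 i - c1 i) (fun i => d2 i - c2 i))).
    2:{ intros i _. unfold ilv. destruct (Nat.even i); auto. }
    rewrite rsum_ilv. specialize (Hs1 m). specialize (Hs2 m). lra.
Qed.

Lemma negligible_mono (N1 N2 : R -> Prop) : (forall x, N2 x -> N1 x) -> negligible N1 -> negligible N2.
Proof.
  intros Hi H eps He. destruct (H eps He) as [c [d [H1 [H2 H3]]]].
  exists c, d. split; [auto|split; auto].
Qed.

Lemma negligible_empty (N : R -> Prop) : (forall x, ~ N x) -> negligible N.
Proof.
  intros Hn eps He. exists (fun _ => 0), (fun _ => 0). split; [intros; lra|split].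
  - intros x Hx. exfalso. exact (Hn x Hx).
  - intros m. rewrite (rsum_ext m _ (fun _ => 0)) by (intros; ring). rewrite rsum_zero. auto.
Qed.

Lemma ae_mono a b (P Q : R -> Prop) : (forall t, a <= t <= b -> P t -> Q t) -> ae_on a b P -> ae_on a b Q.
Proof.
  intros H. apply negligible_mono. intros x [Hx Hq]. split; auto.
Qed.

Lemma ae_and a b (P Q : R -> Prop) : ae_on a b P -> ae_on a b Q -> ae_on a b (fun t => P t /\ Q t).
Proof.
  intros HP HQ. eapply negligible_mono; [|apply (negligible_union _ _ HP HQ)].
  intros x [Hx Hn]. cbv beta. destruct (classic (P x)); [right|left]; split; auto.
Qed.

Lemma ae_all a b (P : R -> Prop) : (forall t, a <= t <= b -> P t) -> ae_on a b P.
Proof. intros H. apply negligible_empty. intros x [Hx Hn]. auto. Qed.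

Lemma abs_cont_sub f a b c d : a <= c -> d <= b -> abs_cont f a b -> abs_cont f c d.
Proof.
  intros Hc Hd H eps He. destruct (H eps He) as [del [Hdl Hdd]]. exists del. split; auto.
  intros m c0 d0 H1 H2 H3. apply Hdd; auto. intros i Hi. specialize (H1 i Hi). lra.
Qed.

Lemma deriv0_bound f s eps : derivable_pt_lim f s 0 -> 0 < eps ->
  exists del, 0 < del /\ forall y, Rabs (y - s) < del -> Rabs (f y - f s) <= eps * Rabs (y - s).
Proof.
  intros H He. destruct (H eps He) as [del Hd]. exists del. split; [apply cond_pos|].
  intros y Hy. destruct (Req_dec (y - s) 0) as [H0|H0].
  - replace y with s by lra. rewrite !Rminus_diag, Rabs_R0. lra.
  - specialize (Hd (y - s) H0 Hy). replace (s + (y - s)) with y in Hd by ring.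
    rewrite Rminus_0_r in Hd. unfold Rdiv in Hd. rewrite Rabs_mult, Rabs_inv in Hd.
    assert (Hp : 0 < Rabs (y - s)) by (apply Rabs_pos_lt; auto).
    apply Rmult_lt_compat_r with (r := Rabs (y - s)) in Hd; auto.
    rewrite Rmult_assoc, Rinv_l in Hd by lra. lra.
Qed.

Lemma small_zero z K : 0 < K -> (forall eps, 0 < eps -> Rabs z <= eps * K) -> z = 0.
Proof.
  intros HK H. destruct (Req_dec z 0) as [|Hz]; auto. exfalso.
  assert (Hp : 0 < Rabs z) by (apply Rabs_pos_lt; auto).
  specialize (H (Rabs z / (2 * K)) ltac:(apply Rdiv_lt_0_compat; lra)).
  replace (Rabs z / (2 * K) * K) with (Rabs z / 2) in H by (field; lra). lra.
Qed.

Lemma ac_const f c d (N : R -> Prop) : c <= d -> abs_cont f c d -> negligible N ->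
  (forall x, c <= x <= d -> ~ N x -> derivable_pt_lim f x 0) -> f d = f c.
Proof.
  intros Hcd Hac HN Hder.
  apply Rminus_diag_uniq. apply (small_zero _ (d - c + 1)); [lra|].
  intros eps He.
  destruct (Hac eps He) as [delta [Hdp Hd]].
  destruct (HN delta Hdp) as [cc [dd [Hccd [Hcov Hsum]]]].
  set (Inv := fun x => exists M (p q : nat -> R),
    (forall i, (M <= i)%nat -> p i = c /\ q i = c) /\
    (forall i, c <= p i <= q i /\ q i <= x) /\
    (forall i j, i <> j -> q i <= p j \/ q j <= p i) /\
    (forall i, (p i = c /\ q i = c) \/ (cc i < p i /\ q i = Rmin (dd i) d)) /\
    Rabs (f x - f c) <= eps * (x - c) + rsum M (fun i => Rabs (f (q i) - f (p i)))).
  set (A := fun x => c <= x <= d /\ Inv x).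
  assert (Ac : A c).
  { split; [lra|]. exists 0%nat, (fun _ => c), (fun _ => c).
    split; [auto|split; [intros; lra|split; [intros; lra|split; [auto|]]]].
    simpl. rewrite Rminus_diag, Rabs_R0. lra. }
  destruct (completeness A) as [s [Hub Hlub]].
  { exists d. intros x [Hx _]. lra. }
  { exists c. auto. }
  assert (Hcs : c <= s) by (apply Hub; auto).
  assert (Hsd : s <= d) by (apply Hlub; intros x [Hx _]; lra).
  assert (Hnear : forall r, r < s -> exists x, A x /\ r < x).
  { intros r Hr. apply NNPP. intros Hno. assert (s <= r); [|lra].
    apply Hlub. intros x Ax. destruct (Rle_dec x r); auto. exfalso. apply Hno. exists x. split; auto. lra. }
  assert (Hkey : exists y, A y /\ (y = d \/ s < y)).
  { destruct (classic (N s)) as [Ns|Ns].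
    - destruct (Hcov s Ns) as [i Hi].
      destruct (Hnear (cc i) ltac:(lra)) as [x [[Hx [M [p [q [H1 [H2 [H3 [H4 H5]]]]]]]] Hxi]].
      assert (Hxs : x <= s) by (apply Hub; split; [auto|exists M, p, q; auto]).
      destruct (H4 i) as [[Hpi Hqi]|[Hpi Hqi]].
      + set (e := Rmin (dd i) d).
        assert (Hxe : x <= e) by (apply Rmin_glb; lra).
        exists e. split.
        * split; [split; [lra| apply Rmin_r]|].
          exists (Nat.max M (S i)), (fun j => if Nat.eqb j i then x else p j), (fun j => if Nat.eqb j i then e else q j).
          split; [|split; [|split; [|split]]].
          -- intros j Hj. destruct (Nat.eqb_spec j i); [lia|]. apply H1. lia.
          -- intros j. destruct (Nat.eqb_spec j i); [lra|]. specialize (H2 j). lra.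
          -- intros j k Hjk. destruct (Nat.eqb_spec j i), (Nat.eqb_spec k i); try lia.
             ++ right. specialize (H2 k); lra.
             ++ left. specialize (H2 j); lra.
             ++ auto.
          -- intros j. destruct (Nat.eqb_spec j i); [subst j; right; split; [lra|auto]|auto].
          -- rewrite (rsum_upd _ i (fun j => Rabs (f (q j) - f (p j)))); [|lia|].
             2:{ intros j Hj. cbv beta. destruct (Nat.eqb_spec j i); [lia|auto]. }
             rewrite (rsum_tail M); [|lia|].
             2:{ intros j Hj. destruct (H1 j Hj) as [-> ->]. rewrite Rminus_diag, Rabs_R0. auto. }
             rewrite Nat.eqb_refl, Hpi, Hqi, Rminus_diag, Rabs_R0.
             assert (Htri : Rabs (f e - f c) <= Rabs (f x - f c) + Rabs (f e - f x)).
             { replace (f e - f c) with ((f x - f c) + (f e - f x)) by ring. apply Rabs_triang. }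
             assert (eps * (x - c) <= eps * (e - c)) by (apply Rmult_le_compat_l; lra).
             lra.
        * unfold e. destruct (Rle_dec (dd i) d).
          -- right. rewrite Rmin_left by auto. lra.
          -- left. rewrite Rmin_right by lra. auto.
      + assert (Hq : q i <= x) by (specialize (H2 i); lra).
        exists x. split; [split; [auto|exists M, p, q; auto]|].
        left. destruct (Rle_dec (dd i) d).
        * rewrite Rmin_left in Hqi by auto. lra.
        * rewrite Rmin_right in Hqi by lra. lra.
    - destruct (deriv0_bound f s eps (Hder s ltac:(lra) Ns) He) as [del [Hdel Hb]].
      destruct (Hnear (s - del/2) ltac:(lra)) as [x [[Hx [M [p [q [H1 [H2 [H3 [H4 H5]]]]]]]] Hxi]].
      assert (Hxs : x <= s) by (apply Hub; split; [auto|exists M, p, q; auto]).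
      set (y := Rmin (s + del/2) d).
      assert (Hsy : s <= y) by (apply Rmin_glb; lra).
      assert (Hyd : y <= s + del/2) by apply Rmin_l.
      exists y. split.
      + split; [split; [lra|apply Rmin_r]|].
        exists M, p, q. split; [auto|split; [|split; [auto|split; [auto|]]]].
        * intros i. specialize (H2 i). lra.
        * assert (B1 := Hb y ltac:(rewrite Rabs_right; lra)).
          assert (B2 := Hb x ltac:(rewrite Rabs_left1; lra)).
          rewrite (Rabs_right (y - s)) in B1 by lra. rewrite (Rabs_left1 (x - s)) in B2 by lra.
          assert (Htri : Rabs (f y - f c) <= Rabs (f x - f c) + Rabs (f y - f s) + Rabs (f x - f s)).
          { replace (f y - f c) with ((f x - f c) + (f y - f s) - (f x - f s)) by ring.
            eapply Rle_trans; [apply Rabs_triang|]. rewrite Rabs_Ropp.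
            assert (H6 := Rabs_triang (f x - f c) (f y - f s)). lra. }
          assert (eps * (y - s) + eps * - (x - s) = eps * (y - c) - eps * (x - c)) by ring.
          lra.
      + unfold y. destruct (Rle_dec (s + del/2) d).
        * right. rewrite Rmin_left by auto. lra.
        * left. rewrite Rmin_right by lra. auto. }
  destruct Hkey as [y [Ay Hy]].
  assert (y <= s) by (apply Hub; auto).
  assert (Hyd : y = d) by (destruct Hy; [auto|lra]). subst y.
  destruct Ay as [_ [M [p [q [H1 [H2 [H3 [H4 H5]]]]]]]].
  assert (Hsm : rsum M (fun i => Rabs (f (q i) - f (p i))) < eps).
  { apply Hd.
    - intros i _. specialize (H2 i). lra.
    - intros i j _ _ Hij. auto.
    - eapply Rle_lt_trans; [|apply (Hsum M)]. apply rsum_le. intros i _.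
      specialize (Hccd i). destruct (H4 i) as [[-> ->]|[Hp ->]]; [lra|].
      assert (Rmin (dd i) d <= dd i) by apply Rmin_l. lra. }
  lra.
Qed.

Lemma dpl_ext f g x l : (forall s, f s = g s) -> derivable_pt_lim f x l -> derivable_pt_lim g x l.
Proof. intros H. replace g with f; auto. apply functional_extensionality; auto. Qed.

Lemma dpl_quad f A B C x : (forall s, f s = A + B * s + C * (s * s)) -> derivable_pt_lim f x (B + 2 * C * x).
Proof.
  intros Hf eps He.
  assert (Hp : 0 < eps / (Rabs C + 1)) by (apply Rdiv_lt_0_compat; [auto|pose proof (Rabs_pos C); lra]).
  exists (mkposreal _ Hp). intros h Hh Hlt. simpl in Hlt. rewrite !Hf.
  replace ((A + B * (x + h) + C * ((x + h) * (x + h)) - (A + B * x + C * (x * x))) / h - (B + 2 * C * x))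
    with (C * h) by (field; auto).
  rewrite Rabs_mult. pose proof (Rabs_pos C). pose proof (Rabs_pos h).
  apply Rle_lt_trans with (Rabs C * (eps / (Rabs C + 1))).
  { apply Rmult_le_compat_l; lra. }
  replace (Rabs C * (eps / (Rabs C + 1))) with (eps * (Rabs C / (Rabs C + 1))) by (field; lra).
  assert (Rabs C / (Rabs C + 1) < 1).
  { apply (Rmult_lt_reg_r (Rabs C + 1)); [lra|]. unfold Rdiv. rewrite Rmult_assoc, Rinv_l by lra. lra. }
  assert (eps * (Rabs C / (Rabs C + 1)) < eps * 1) by (apply Rmult_lt_compat_l; lra). lra.
Qed.

Lemma dpl_loc g a b K t : (forall s, a < s < b -> g s = K) -> a < t < b -> derivable_pt_lim g t 0.
Proof.
  intros Hg Ht eps He.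
  assert (Hp : 0 < Rmin (t - a) (b - t)) by (apply Rmin_glb_lt; lra).
  exists (mkposreal _ Hp). intros h Hh Hlt. simpl in Hlt.
  assert (Hm1 := Rmin_l (t - a) (b - t)). assert (Hm2 := Rmin_r (t - a) (b - t)).
  assert (Habs := Rle_abs h). assert (Habs2 := Rle_abs (- h)). rewrite Rabs_Ropp in Habs2.
  rewrite (Hg (t + h)) by lra. rewrite (Hg t) by lra.
  replace ((K - K) / h - 0) with 0 by (field; auto). rewrite Rabs_R0. auto.
Qed.

Lemma const_on g T a b (N : R -> Prop) : negligible N -> abs_cont g 0 T -> 0 <= a -> b <= T ->
  (forall x, a < x < b -> ~ N x -> derivable_pt_lim g x 0) ->
  forall s t, a < s < b -> a < t < b -> g s = g t.
Proof.
  intros HN Hac Ha Hb Hd s t Hs Ht.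
  destruct (Rle_dec s t).
  - symmetry. apply (ac_const g s t N); [lra| | auto |].
    + apply (abs_cont_sub g 0 T); [lra|lra|auto].
    + intros x Hx Hn. apply Hd; auto. lra.
  - apply (ac_const g t s N); [lra| | auto |].
    + apply (abs_cont_sub g 0 T); [lra|lra|auto].
    + intros x Hx Hn. apply Hd; auto. lra.
Qed.

Lemma part1 : forall (T : R) (lam gamma : R -> pt) (u : R -> nat -> R) (a b : R),
     extremal_pair 3 2 Xex T lam gamma u ->
     0 <= a -> a < b -> b <= T ->
     abnormal_arc 3 2 Xex lam gamma a b ->
     (exists t1 t2, a < t1 < b /\ a < t2 < b /\
        exists j, (j < 3)%nat /\ gamma t1 j <> gamma t2 j) ->
     exists z0 : R, forall t, a < t < b ->
       gamma t 1%nat = 0 /\ gamma t 2%nat = z0.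
Proof.
  intros T lam gamma u a b Hep Ha Hab Hb Habn Hnc.
  destruct Hep as [[HacG [Hctl HdG]] [HacL [Hnz [Hham Hmax]]]].
  assert (HN := ae_and _ _ _ _ HdG Hham).
  set (N := fun t => 0 <= t <= T /\ ~ ((forall j, (j < 3)%nat ->
       derivable_pt_lim (fun s => gamma s j) t (rsum 2 (fun i => u t i * Xex i (gamma t) j))) /\
     (forall j, (j < 3)%nat ->
     (exists dl, derivable_pt_lim (fun s => lam s j) t dl /\
        derivable_pt_lim (fun s => Ham 3 2 Xex (lam t) (upd (gamma t) j s) (u t))
                         (gamma t j) (- dl)) /\
     (exists dg, derivable_pt_lim (fun s => gamma s j) t dg /\
        derivable_pt_lim (fun s => Ham 3 2 Xex (upd (lam t) j s) (gamma t) (u t))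
                         (lam t j) dg)))) in HN.
  assert (F1 : forall t, a < t < b -> lam t 1%nat = 0).
  { intros t Ht. assert (H := Habn t Ht 1%nat ltac:(lia)).
    unfold switching, pairing, Xex, X1, X2 in H. simpl in H. lra. }
  assert (F2 : forall t, a < t < b -> lam t 0%nat + lam t 2%nat * (gamma t 1%nat * gamma t 1%nat) = 0).
  { intros t Ht. assert (H := Habn t Ht 0%nat ltac:(lia)).
    unfold switching, pairing, Xex, X1, X2 in H. simpl in H. lra. }
  assert (F3 : forall t, a < t < b -> lam t 2%nat <> 0).
  { intros t Ht Hz. destruct (Hnz t ltac:(lra)) as [j [Hj Hj0]].
    assert (H1 := F1 t Ht). assert (H2 := F2 t Ht). rewrite Hz in H2.
    destruct j as [|[|[|j]]]; try lia; apply Hj0; auto; lra. }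
  assert (Hgood : forall t, a < t < b -> ~ N t ->
     derivable_pt_lim (fun s => lam s 0%nat) t 0 /\
     derivable_pt_lim (fun s => lam s 2%nat) t 0 /\
     u t 0%nat * gamma t 1%nat = 0 /\
     derivable_pt_lim (fun s => gamma s 0%nat) t (u t 0%nat) /\
     derivable_pt_lim (fun s => gamma s 1%nat) t (u t 1%nat) /\
     derivable_pt_lim (fun s => gamma s 2%nat) t (u t 0%nat * (gamma t 1%nat * gamma t 1%nat))).
  { intros t Ht HnN.
    assert (HG : (forall j, (j < 3)%nat ->
       derivable_pt_lim (fun s => gamma s j) t (rsum 2 (fun i => u t i * Xex i (gamma t) j))) /\
     (forall j, (j < 3)%nat ->
     (exists dl, derivable_pt_lim (fun s => lam s j) t dl /\
        derivable_pt_lim (fun s => Ham 3 2 Xex (lam t) (upd (gamma t) j s) (u t))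
                         (gamma t j) (- dl)) /\
     (exists dg, derivable_pt_lim (fun s => gamma s j) t dg /\
        derivable_pt_lim (fun s => Ham 3 2 Xex (upd (lam t) j s) (gamma t) (u t))
                         (lam t j) dg))).
    { apply NNPP. intros Hn. apply HnN. split; [lra|auto]. }
    destruct HG as [Hg Hh].
    destruct (Hh 0%nat ltac:(lia)) as [[dl0 [D0 E0]] _].
    destruct (Hh 1%nat ltac:(lia)) as [[dl1 [D1 E1]] _].
    destruct (Hh 2%nat ltac:(lia)) as [[dl2 [D2 E2]] _].
    assert (Q0 := dpl_quad (fun s => Ham 3 2 Xex (lam t) (upd (gamma t) 0 s) (u t))
                   (Ham 3 2 Xex (lam t) (gamma t) (u t)) 0 0 (gamma t 0%nat)
                   ltac:(intros s; unfold Ham, pairing, upd, Xex, X1, X2; simpl; ring)).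
    assert (Q2 := dpl_quad (fun s => Ham 3 2 Xex (lam t) (upd (gamma t) 2 s) (u t))
                   (Ham 3 2 Xex (lam t) (gamma t) (u t)) 0 0 (gamma t 2%nat)
                   ltac:(intros s; unfold Ham, pairing, upd, Xex, X1, X2; simpl; ring)).
    assert (Q1 := dpl_quad (fun s => Ham 3 2 Xex (lam t) (upd (gamma t) 1 s) (u t))
                   (u t 0%nat * lam t 0%nat + u t 1%nat * lam t 1%nat) 0 (u t 0%nat * lam t 2%nat) (gamma t 1%nat)
                   ltac:(intros s; unfold Ham, pairing, upd, Xex, X1, X2; simpl; ring)).
    assert (U0 := uniqueness_limite _ _ _ _ E0 Q0).
    assert (U1 := uniqueness_limite _ _ _ _ E1 Q1).
    assert (U2 := uniqueness_limite _ _ _ _ E2 Q2).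
    assert (L1 := dpl_loc (fun s => lam s 1%nat) a b 0 t F1 Ht).
    assert (U1' := uniqueness_limite _ _ _ _ D1 L1).
    split; [replace 0 with dl0 by lra; auto|].
    split; [replace 0 with dl2 by lra; auto|].
    split.
    { assert (Hl2 := F3 t Ht).
      assert (Hp : lam t 2%nat * (u t 0%nat * gamma t 1%nat) = 0) by nra.
      destruct (Rmult_integral _ _ Hp); [contradiction|auto]. }
    split; [|split].
    - assert (H := Hg 0%nat ltac:(lia)). eapply dpl_ext in H; [|intros; reflexivity].
      replace (u t 0%nat) with (rsum 2 (fun i => u t i * Xex i (gamma t) 0%nat)); auto.
      unfold Xex, X1, X2; simpl; ring.
    - assert (H := Hg 1%nat ltac:(lia)).
      replace (u t 1%nat) with (rsum 2 (fun i => u t i * Xex i (gamma t) 1%nat)); auto.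
      unfold Xex, X1, X2; simpl; ring.
    - assert (H := Hg 2%nat ltac:(lia)).
      replace (u t 0%nat * (gamma t 1%nat * gamma t 1%nat)) with (rsum 2 (fun i => u t i * Xex i (gamma t) 2%nat)); auto.
      unfold Xex, X1, X2; simpl; ring. }
  assert (Hc : forall g, abs_cont g 0 T -> (forall x, a < x < b -> ~ N x -> derivable_pt_lim g x 0) ->
            forall s t, a < s < b -> a < t < b -> g s = g t).
  { intros g Hg Hd. apply (const_on g T a b N); auto. }
  assert (C0 := Hc (fun s => lam s 0%nat) (HacL 0%nat ltac:(lia)) ltac:(intros x Hx Hn; apply (Hgood x Hx Hn))).
  assert (C2 := Hc (fun s => lam s 2%nat) (HacL 2%nat ltac:(lia)) ltac:(intros x Hx Hn; apply (Hgood x Hx Hn))).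
  simpl in C0, C2.
  set (m := (a + b) / 2).
  assert (Hm : a < m < b) by (unfold m; lra).
  assert (Hy2 : forall t, a < t < b -> gamma t 1%nat * gamma t 1%nat = gamma m 1%nat * gamma m 1%nat).
  { intros t Ht. assert (E1 := F2 t Ht). assert (E2 := F2 m Hm).
    rewrite (C0 t m Ht Hm), (C2 t m Ht Hm) in E1.
    assert (Hl := F3 m Hm).
    apply (Rmult_eq_reg_l (lam m 2%nat)); auto. lra. }
  destruct (Req_dec (gamma m 1%nat) 0) as [Hm0|Hm0].
  - assert (Y0 : forall t, a < t < b -> gamma t 1%nat = 0).
    { intros t Ht. assert (H := Hy2 t Ht). rewrite Hm0 in H. nra. }
    exists (gamma m 2%nat). intros t Ht. split; [auto|].
    apply (Hc (fun s => gamma s 2%nat) (HacG 2%nat ltac:(lia))); auto.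
    intros x Hx Hn. destruct (Hgood x Hx Hn) as [_ [_ [_ [_ [_ H]]]]].
    rewrite (Y0 x Hx) in H. replace 0 with (u x 0%nat * (0 * 0)) by ring. auto.
  - exfalso.
    assert (Hd0 : forall x, a < x < b -> ~ N x -> u x 0%nat = 0 /\ u x 1%nat = 0).
    { intros x Hx Hn. destruct (Hgood x Hx Hn) as [_ [_ [Hu0 [_ [Dy _]]]]].
      assert (Hy : gamma x 1%nat <> 0).
      { intros Hz. assert (H := Hy2 x Hx). rewrite Hz in H.
        assert (gamma m 1%nat * gamma m 1%nat > 0) by (apply Rsqr_pos_lt; auto). lra. }
      split.
      - destruct (Rmult_integral _ _ Hu0); [auto|contradiction].
      - assert (M1 := derivable_pt_lim_mult _ _ _ _ _ Dy Dy).
        assert (L := dpl_loc (fun s => gamma s 1%nat * gamma s 1%nat) a b _ x Hy2 Hx).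
        assert (U := uniqueness_limite _ _ _ _ M1 L).
        assert (Hp : gamma x 1%nat * (2 * u x 1%nat) = 0) by (simpl in U; lra).
        destruct (Rmult_integral _ _ Hp); [contradiction|lra]. }
    assert (Cj : forall j, (j < 3)%nat -> forall s t, a < s < b -> a < t < b -> gamma s j = gamma t j).
    { intros j Hj. apply (Hc (fun s => gamma s j) (HacG j Hj)).
      intros x Hx Hn. destruct (Hd0 x Hx Hn) as [Hu0 Hu1].
      destruct (Hgood x Hx Hn) as [_ [_ [_ [D0 [D1 D2]]]]].
      rewrite Hu0 in D0, D2. rewrite Hu1 in D1.
      destruct j as [|[|[|j]]]; try lia; auto.
      replace 0 with (0 * (gamma x 1%nat * gamma x 1%nat)) by ring. auto. }
    destruct Hnc as [t1 [t2 [H1 [H2 [j [Hj Hne]]]]]].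
    apply Hne. apply (Cj j Hj); auto.
Qed.

Lemma dpl_quad' f A B C x l : (forall s, f s = A + B * s + C * (s * s)) -> l = B + 2 * C * x -> derivable_pt_lim f x l.
Proof. intros H ->. apply dpl_quad with A; auto. Qed.

Lemma part2 : forall (T : R) (gamma : R -> pt) (u : R -> nat -> R) (z0 : R),
     admissible 3 2 Xex T gamma u ->
     (forall t, 0 <= t <= T -> gamma t 1%nat = 0 /\ gamma t 2%nat = z0) ->
     exists lam : R -> pt,
       extremal_pair 3 2 Xex T lam gamma u /\
       abnormal_arc 3 2 Xex lam gamma 0 T.
Proof.
  intros T gamma u z0 Hadm Hline.
  exists (fun _ (j : nat) => match j with 2%nat => 1 | _ => 0 end).
  split.
  - split; [auto|]. destruct Hadm as [HacG [Hctl HdG]].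
    split; [|split; [|split]].
    + intros j _ eps He. exists 1. split; [lra|]. intros m c d _ _ _.
      rewrite (rsum_ext m _ (fun _ => 0)); [rewrite rsum_zero; lra|].
      intros i _. rewrite Rminus_diag, Rabs_R0. auto.
    + intros t _. exists 2%nat. split; [lia|]. simpl. lra.
    + eapply ae_mono; [|exact HdG]. intros t Ht Hd j Hj. cbv beta in Hd.
      destruct (Hline t Ht) as [Hy Hz].
      destruct j as [|[|[|j]]]; try lia; split.
      * exists 0. split; [apply (dpl_quad' _ 0 0 0); [intros; ring|ring]|].
        apply (dpl_quad' _ (Ham 3 2 Xex (fun j => match j with 2%nat => 1 | _ => 0 end) (gamma t) (u t)) 0 0).
        { intros s; unfold Ham, pairing, upd, Xex, X1, X2; simpl; ring. } ring.
      * exists (rsum 2 (fun i => u t i * Xex i (gamma t) 0%nat)). split; [apply Hd; lia|].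
        apply (dpl_quad' _ (u t 0%nat * (gamma t 1%nat * gamma t 1%nat)) (u t 0%nat) 0).
        { intros s; unfold Ham, pairing, upd, Xex, X1, X2; simpl; ring. }
        unfold Xex, X1, X2; simpl; ring.
      * exists 0. split; [apply (dpl_quad' _ 0 0 0); [intros; ring|ring]|].
        apply (dpl_quad' _ 0 0 (u t 0%nat)).
        { intros s; unfold Ham, pairing, upd, Xex, X1, X2; simpl; ring. } rewrite Hy. ring.
      * exists (rsum 2 (fun i => u t i * Xex i (gamma t) 1%nat)). split; [apply Hd; lia|].
        apply (dpl_quad' _ (u t 0%nat * (gamma t 1%nat * gamma t 1%nat)) (u t 1%nat) 0).
        { intros s; unfold Ham, pairing, upd, Xex, X1, X2; simpl; ring. }
        unfold Xex, X1, X2; simpl; ring.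
      * exists 0. split; [apply (dpl_quad' _ 1 0 0); [intros; ring|ring]|].
        apply (dpl_quad' _ (Ham 3 2 Xex (fun j => match j with 2%nat => 1 | _ => 0 end) (gamma t) (u t)) 0 0).
        { intros s; unfold Ham, pairing, upd, Xex, X1, X2; simpl; ring. } ring.
      * exists (rsum 2 (fun i => u t i * Xex i (gamma t) 2%nat)). split; [apply Hd; lia|].
        apply (dpl_quad' _ 0 (u t 0%nat * (gamma t 1%nat * gamma t 1%nat)) 0).
        { intros s; unfold Ham, pairing, upd, Xex, X1, X2; simpl; ring. }
        unfold Xex, X1, X2; simpl; ring.
    + exists 0. split; [lra|]. apply ae_all. intros t Ht.
      destruct (Hline t Ht) as [Hy Hz].
      unfold Ham, pairing, Xex, X1, X2; simpl. rewrite Hy.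
      split; [ring|].
      repeat match goal with |- context[Rabs ?x] => 
        let e := fresh in assert (e : x = 0) by ring; rewrite e; clear e end.
      rewrite Rabs_R0. ring.
  - intros t Ht j Hj. destruct (Hline t ltac:(lra)) as [Hy Hz].
    unfold switching, pairing, Xex, X1, X2.
    destruct j as [|[|j]]; try lia; simpl; try rewrite Hy; ring.
Qed.

Theorem mainTheorem15 :
  (forall (T : R) (lam gamma : R -> pt) (u : R -> nat -> R) (a b : R),
     extremal_pair 3 2 Xex T lam gamma u ->
     0 <= a -> a < b -> b <= T ->
     abnormal_arc 3 2 Xex lam gamma a b ->
     (exists t1 t2, a < t1 < b /\ a < t2 < b /\
        exists j, (j < 3)%nat /\ gamma t1 j <> gamma t2 j) ->
     exists z0 : R, forall t, a < t < b ->
       gamma t 1%nat = 0 /\ gamma t 2%nat = z0)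
  /\
  (forall (T : R) (gamma : R -> pt) (u : R -> nat -> R) (z0 : R),
     admissible 3 2 Xex T gamma u ->
     (forall t, 0 <= t <= T -> gamma t 1%nat = 0 /\ gamma t 2%nat = z0) ->
     exists lam : R -> pt,
       extremal_pair 3 2 Xex T lam gamma u /\
       abnormal_arc 3 2 Xex lam gamma 0 T).
Proof. split; [exact part1 | exact part2]. Qed.
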